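(* Let $P$ be a set of $n$ points in the plane in convex position, and let $S\subseteq P$ be a dominating set of the unit-disk graph $G(P)$. Then there exist a partition $\mathcal{A}$ of $P$ (into consecutive, nonempty, pairwise disjoint sublists) and a line-separable assignment $\phi:\mathcal{A}\rightarrow S$ such that for every center $p\in S$ we have $p\in G_p$, i.e., one of the sublists assigned to $p$ contains $p$.
   Context: $P$ is in convex position (every point of $P$ is a vertex of its convex hull), no three points of $P$ are collinear and no four lie on a common circle. $P$ is viewed as the cyclic list $\langle p_1,\dots,p_n\rangle$ ordered counterclockwise along the convex hull. A sublist is a contiguous subsequence of this cyclic list; sublists are consecutive if their concatenation is again a sublist. For a point $p$, $D_p$ is the closed disk of radius $1$ centered at $p$. The unit-disk graph $G(P)$ has vertex set $P$ and an edge between two points iff their Euclidean distance is at most $1$. A dominating set is a set $S\subseteq P$ such that every point of $P$ is in $S$ or adjacent to a point of $S$; points of $S$ are called centers. A partition $\mathcal{A}$ of $P$ is a partition of the cyclic list into consecutive, nonempty, pairwise disjoint sublists. An assignment $\phi:\mathcal{A}\to S$ maps each sublist $\alpha\in\mathcal{A}$ to exactly one center $p\in S$ with $\alpha\subseteq D_p$. The group $G_p$ of a center $p$ is the set of points in the sublists assigned to $p$. The assignment is line separable if for every two distinct centers $p,q$ there is a line $\ell$ such that the points of one of $G_p,G_q$ lie on one side of $\ell$ or on $\ell$, and the points of the other lie strictly on the other side of $\ell$. *)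

(* Defs.v *)
From HB Require Import structures.
From mathcomp Require Import all_boot all_order all_algebra.
Set Implicit Arguments. Unset Strict Implicit. Unset Printing Implicit Defensive.
Import Order.TTheory GRing.Theory Num.Theory.
Local Open Scope ring_scope.

Section Geometry.
Variable R : realFieldType.
Definition pt := (R * R)%type.

Definition dist2 (a b : pt) : R := (a.1 - b.1) ^+ 2 + (a.2 - b.2) ^+ 2.

(* orientation determinant: > 0 iff a, b, c make a left (ccw) turn *)
Definition orient (a b c : pt) : R :=
  (b.1 - a.1) * (c.2 - a.2) - (b.2 - a.2) * (c.1 - a.1).

Variable n : nat.
Variable p : 'I_n -> pt.

Definition convex_position : Prop :=
  forall i : 'I_n, ~ exists w : 'I_n -> R,
    [/\ forall j, 0 <= w j, w i = 0, \sum_j w j = 1 &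
        (\sum_j w j * (p j).1, \sum_j w j * (p j).2) = p i].

(* p_0, ..., p_{n-1} is the counterclockwise order along the hull:
   each p_i p_{i+1 mod n} is a hull edge with all other points strictly
   to its left *)
Definition ccw_hull_order : Prop :=
  forall i j : 'I_n, j != i -> j != ordS i -> 0 < orient (p i) (p (ordS i)) (p j).

Definition no_three_collinear : Prop :=
  forall i j k : 'I_n, i != j -> j != k -> i != k -> orient (p i) (p j) (p k) != 0.

Definition no_four_cocircular : Prop :=
  forall i j k l : 'I_n, uniq [:: i; j; k; l] ->
    ~ exists (o : pt) (r : R), 0 < r /\
      [/\ dist2 (p i) o = r, dist2 (p j) o = r, dist2 (p k) o = r & dist2 (p l) o = r].

Definition udg_adj (i j : 'I_n) : Prop := i != j /\ dist2 (p i) (p j) <= 1.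

Definition dominating (S : {set 'I_n}) : Prop :=
  forall i : 'I_n, i \in S \/ exists2 j, j \in S & udg_adj i j.

(* a sublist of the cyclic list: the [len] consecutive indices starting
   at [start], i.e. start, start+1, ..., start+len-1 (mod n) *)
Definition in_arc (start : 'I_n) (len : nat) (i : 'I_n) : bool :=
  ((i + n - start) %% n < len)%N.

Definition is_partition (k : nat) (start : 'I_k -> 'I_n) (len : 'I_k -> nat) : Prop :=
  (forall j, 0 < len j <= n)%N /\
  (forall i : 'I_n, exists! j : 'I_k, in_arc (start j) (len j) i).

Definition group_of (k : nat) (start : 'I_k -> 'I_n) (len : 'I_k -> nat)
  (phi : 'I_k -> 'I_n) (c : 'I_n) (i : 'I_n) : Prop :=
  exists2 j, phi j = c & in_arc (start j) (len j) i.

Definition weakly_strictly_separated (A B : 'I_n -> Prop) : Prop :=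
  exists a b e : R, (a != 0 \/ b != 0) /\
    (forall i, A i -> a * (p i).1 + b * (p i).2 + e <= 0) /\
    (forall i, B i -> 0 < a * (p i).1 + b * (p i).2 + e).

Definition line_separable (S : {set 'I_n}) (k : nat) (start : 'I_k -> 'I_n)
  (len : 'I_k -> nat) (phi : 'I_k -> 'I_n) : Prop :=
  forall c d, c \in S -> d \in S -> c != d ->
    weakly_strictly_separated (group_of start len phi c) (group_of start len phi d) \/
    weakly_strictly_separated (group_of start len phi d) (group_of start len phi c).

Definition is_assignment (S : {set 'I_n}) (k : nat) (start : 'I_k -> 'I_n)
  (len : 'I_k -> nat) (phi : 'I_k -> 'I_n) : Prop :=
  forall j, phi j \in S /\
    forall i, in_arc (start j) (len j) i -> dist2 (p i) (p (phi j)) <= 1.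

End Geometry.

(* Main.v *)
Require Import Defs.
From mathcomp Require Import all_boot all_order all_algebra.
From mathcomp Require Import zify ring lra.
Set Implicit Arguments. Unset Strict Implicit. Unset Printing Implicit Defensive.
Import Order.TTheory GRing.Theory Num.Theory.
Local Open Scope ring_scope.

Section Aux.
Variable R : realFieldType.
Variable n : nat.
Variable p : 'I_n -> pt R.
Variable S : {set 'I_n}.

Lemma in_arc1 (j i : 'I_n) : in_arc j 1 i = (i == j).
Proof.
rewrite /in_arc ltnS leqn0 -[i == j]/(nat_of_ord i == nat_of_ord j).
have hi := ltn_ord i; have hj := ltn_ord j.
case: (leqP j i) => hij.
- rewrite -addnBAC // modnDr modn_small; last lia.
  apply/eqP/eqP; lia.
- rewrite modn_small; last lia.
  apply/eqP/eqP; lia.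
Qed.

Definition best (i s : 'I_n) : bool :=
  (s \in S) && [forall t in S, dist2 (p i) (p s) <= dist2 (p i) (p t)].

Definition phi (i : 'I_n) : 'I_n :=
  if [pick s | best i s] is Some s0 then Order.arg_min s0 (best i) (fun s => val s) else i.

Lemma best_ex (i : 'I_n) (s0 : 'I_n) : s0 \in S -> exists s, best i s.
Proof.
move=> hs0.
case: (@arg_minP _ _ _ s0 [pred s | s \in S] (fun s => dist2 (p i) (p s)) hs0) => s hs hmin.
exists s; rewrite /best; move: hs; rewrite /= => ->; apply/forallP => t; apply/implyP => ht.
exact: hmin.
Qed.

Lemma phiP (i : 'I_n) : (exists s, best i s) ->
  best i (phi i) /\ forall s, best i s -> (val (phi i) <= val s)%N.
Proof.
move=> [s hs]; rewrite /phi; case: pickP => [s0 hs0|]; last by move=> /(_ s); rewrite hs.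
case: (@arg_minP _ _ _ s0 (best i) (fun s => val s) hs0) => m hm hmin.
by split=> // t /hmin.
Qed.

Lemma dist2_ge0 (a b : pt R) : 0 <= dist2 a b.
Proof. by rewrite /dist2 addr_ge0 // sqr_ge0. Qed.

Lemma dist2_eq0 (a b : pt R) : dist2 a b = 0 -> a = b.
Proof.
case: a b => a1 a2 [b1 b2]; rewrite /dist2 /= => h.
have h1 : (a1 - b1) ^+ 2 = 0 by apply/eqP; rewrite eq_le sqr_ge0 andbT -h lerDl sqr_ge0.
have h2 : (a2 - b2) ^+ 2 = 0 by move: h; rewrite h1 add0r.
move/eqP: h1; rewrite sqrf_eq0 subr_eq0 => /eqP ->.
by move/eqP: h2; rewrite sqrf_eq0 subr_eq0 => /eqP ->.
Qed.

Lemma dist2C (a b : pt R) : dist2 a b = dist2 b a.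
Proof. rewrite /dist2; ring. Qed.

Lemma distinct (Hconv : convex_position p) (i j : 'I_n) : i != j -> p i != p j.
Proof.
move=> hij; apply/eqP => he; apply: (Hconv i).
exists (fun k => if k == j then 1 else 0); split.
- by move=> k; case: (k == j).
- by rewrite (negbTE hij).
- by rewrite (bigD1 j) //= eqxx big1 ?addr0 // => k /negbTE ->.
- rewrite he [RHS]surjective_pairing.
  congr pair; rewrite (bigD1 j) //= eqxx mul1r big1 ?addr0 //;
  by move=> k /negbTE ->; rewrite mul0r.
Qed.

End Aux.

Theorem lemma1 (R : realFieldType) (n : nat) (p : 'I_n -> pt R)
  (Hconv : convex_position p) (Hccw : ccw_hull_order p)
  (Hcol : no_three_collinear p) (Hcirc : no_four_cocircular p)
  (S : {set 'I_n}) (HS : dominating p S) :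
  exists (k : nat) (start : 'I_k -> 'I_n) (len : 'I_k -> nat) (phi : 'I_k -> 'I_n),
    [/\ is_partition start len,
        is_assignment p S start len phi,
        line_separable p S start len phi &
        forall c, c \in S -> exists j, phi j = c /\ in_arc (start j) (len j) c].
Proof.
have ex : forall i : 'I_n, exists s, best p S i s.
  move=> i; case: (HS i) => [hi|[j hj _]]; exact: best_ex hi || exact: best_ex hj.
exists n, id, (fun _ => 1%N), (phi p S).
have grp : forall c i, group_of id (fun _ => 1%N) (phi p S) c i <-> phi p S i = c.
  move=> c i; split; first by case=> j <-; rewrite /= in_arc1 => /eqP ->.
  by move=> <-; exists i => //=; rewrite in_arc1.
split.
- split; first by move=> j; rewrite /=; apply: leq_ltn_trans (ltn_ord j).
  move=> i; exists i; split => /=; first by rewrite in_arc1.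
  by move=> j; rewrite in_arc1 => /eqP.
- move=> j; have [/andP [hS /forallP hall] _] := phiP (ex j); split => // i.
  rewrite /= in_arc1 => /eqP ->.
  case: (HS j) => [hj|[t ht [_ hd]]].
  + apply: le_trans (implyP (hall j) hj) _; by rewrite /dist2 !subrr expr0n /= addr0 ler01.
  + by apply: le_trans (implyP (hall t) ht) hd.
- have key : forall c d, c \in S -> d \in S -> (val c < val d)%N ->
    weakly_strictly_separated p (group_of id (fun _ => 1%N) (phi p S) c)
                                (group_of id (fun _ => 1%N) (phi p S) d).
    move=> c d hc hd hcd.
    have hne : p c != p d by apply: distinct => //; apply/eqP => e; move: hcd; rewrite e ltnn.
    exists (2 * ((p d).1 - (p c).1)), (2 * ((p d).2 - (p c).2)),
      ((p c).1 ^+ 2 + (p c).2 ^+ 2 - (p d).1 ^+ 2 - (p d).2 ^+ 2).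
    have lin : forall x : pt R, 2 * ((p d).1 - (p c).1) * x.1 + 2 * ((p d).2 - (p c).2) * x.2 +
       ((p c).1 ^+ 2 + (p c).2 ^+ 2 - (p d).1 ^+ 2 - (p d).2 ^+ 2) = dist2 x (p c) - dist2 x (p d).
      by move=> x; rewrite /dist2; ring.
    split; [|split].
    + move: hne; case: (p c) (p d) => c1 c2 [d1 d2] /= hne.
      case: (eqVneq c1 d1) => [e1|n1]; last by left; rewrite mulf_eq0 negb_or pnatr_eq0 /= subr_eq0 eq_sym.
      right; rewrite mulf_eq0 negb_or pnatr_eq0 /= subr_eq0; apply: contra hne => /eqP e2.
      by rewrite e1 e2.
    + move=> i /grp hi; rewrite lin subr_le0.
      have [/andP [_ /forallP hall] _] := phiP (ex i).
      by move: (implyP (hall d) hd); rewrite hi.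
    + move=> i /grp hi; rewrite lin subr_gt0.
      have [/andP [_ /forallP hall] hmin] := phiP (ex i).
      move: (implyP (hall c) hc); rewrite hi le_eqVlt => /orP [/eqP e|//].
      have : best p S i c.
        rewrite /best hc /=; apply/forallP => t; apply/implyP => ht.
        by rewrite -e; move: (implyP (hall t) ht); rewrite hi.
      by move/hmin; rewrite hi leqNgt hcd.
  move=> c d hc hd hcd; case: (ltngtP (val c) (val d)) => h.
  + by left; apply: key.
  + by right; apply: key.
  + by move: hcd; rewrite (val_inj h) eqxx.
- move=> c hc; exists c; split; last by rewrite /= in_arc1.
  have [/andP [hS /forallP hall] _] := phiP (ex c).
  move: (implyP (hall c) hc); rewrite {2}/dist2 !subrr expr0n /= addr0 => hle.
  apply/eqP; apply: contraT => hne.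
  have e : p c = p (phi p S c) by apply: dist2_eq0; apply/eqP; rewrite eq_le hle dist2_ge0.
  by move: (distinct Hconv hne); rewrite e eqxx.
Qed.
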